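(* If distribution $\mathcal D$ stochastically dominates distribution $\mathcal D'$ (both with finite support), then ${\sf MBRev}(\mathcal D)\ge{\sf MBRev}(\mathcal D')$.
   Context: $\mathcal D$ stochastically dominates $\mathcal D'$ if $\Pr_{u\sim\mathcal D}[u\ge t]\ge\Pr_{u\sim\mathcal D'}[u\ge t]$ for all $t$. For a finitely supported distribution with support $v_1<\dots<v_m$ and $\Pr[v_i]=q_i>0$, ${\sf MBRev}$ is the optimal value of the LP: maximize $\sum_i q_i(v_ix_i-u_i)$ subject to $u_i\ge(v_i-v_j)x_j$ for all $i>j$, $u_i\ge0$, $0\le x_i\le1$. Equivalently ${\sf MBRev}=\max_{x}\mathbb E_{v_i}[v_ix_i-\max_{j<i}(v_i-v_j)x_j]$ (max over $j<i$ of an empty set taken as $0$, and terms negative replaced by $0$ through $u_i\ge0$). *)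

(* Defs.v *)
From HB Require Import structures.
From mathcomp Require Import all_boot all_order all_algebra.
Set Implicit Arguments. Unset Strict Implicit. Unset Printing Implicit Defensive.
Import Order.TTheory GRing.Theory Num.Theory.
Local Open Scope ring_scope.

Definition is_fin_dist (R : realFieldType) (m : nat) (v q : 'I_m -> R) : Prop :=
  (forall i j : 'I_m, (i < j)%N -> v i < v j) /\
  (forall i : 'I_m, 0 < q i) /\
  \sum_(i < m) q i = 1.

Definition tail_prob (R : realFieldType) (m : nat) (v q : 'I_m -> R) (t : R) : R :=
  \sum_(i < m | t <= v i) q i.

Definition stoch_dominates (R : realFieldType) (m : nat) (v q : 'I_m -> R)
    (m' : nat) (v' q' : 'I_m' -> R) : Prop :=
  forall t : R, tail_prob v' q' t <= tail_prob v q t.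

Definition MB_feasible (R : realFieldType) (m : nat) (v : 'I_m -> R)
    (x u : 'I_m -> R) : Prop :=
  (forall i j : 'I_m, (j < i)%N -> (v i - v j) * x j <= u i) /\
  (forall i : 'I_m, 0 <= u i) /\
  (forall i : 'I_m, 0 <= x i <= 1).

Definition MB_obj (R : realFieldType) (m : nat) (v q : 'I_m -> R)
    (x u : 'I_m -> R) : R :=
  \sum_(i < m) q i * (v i * x i - u i).

Definition is_MBRev (R : realFieldType) (m : nat) (v q : 'I_m -> R) (r : R) : Prop :=
  (exists x u : 'I_m -> R, MB_feasible v x u /\ MB_obj v q x u = r) /\
  (forall x u : 'I_m -> R, MB_feasible v x u -> MB_obj v q x u <= r).

(* Main.v *)
Require Import Defs.
From HB Require Import structures.
From mathcomp Require Import all_boot all_order all_algebra.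
From mathcomp Require Import lra.
Import Order.TTheory GRing.Theory Num.Theory.
Local Open Scope ring_scope.

Section BMax.
Variable R : realFieldType.

Lemma bmax_ge0 (I : Type) (r : seq I) (P : pred I) (F : I -> R) :
  0 <= \big[Num.max/0]_(j <- r | P j) F j.
Proof. by elim/big_rec: _ => // i y _ Hy; rewrite le_max Hy orbT. Qed.

Lemma bmax_le (I : Type) (r : seq I) (P : pred I) (F : I -> R) c :
  0 <= c -> (forall k, P k -> F k <= c) -> \big[Num.max/0]_(j <- r | P j) F j <= c.
Proof. by move=> c0 H; elim/big_rec: _ => // i y Pi Hy; rewrite ge_max Hy H. Qed.

Lemma le_bmax (I : eqType) (r : seq I) (P : pred I) (F : I -> R) k :
  k \in r -> P k -> F k <= \big[Num.max/0]_(j <- r | P j) F j.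
Proof.
elim: r => [|a r IH] //=; rewrite inE big_cons; case/orP => [/eqP-> Pk | kr Pk].
  by rewrite Pk le_max lexx.
by case: ifP => _; [rewrite le_max IH ?orbT // | exact: IH].
Qed.

Lemma bmax_att (I : Type) (r : seq I) (P : pred I) (F : I -> R) :
  let M := \big[Num.max/0]_(j <- r | P j) F j in
  M = 0 \/ exists k, P k /\ M = F k.
Proof.
elim/big_rec: _ => [|i y Pi [->|[k [Pk ->]]]]; first by left.
- case: (lerP (F i) 0) => H; [by left | right; by exists i].
- case: (lerP (F i) (F k)) => H; right; [by exists k | by exists i].
Qed.
End BMax.

Lemma dom_mono (R : realFieldType) m (v q : 'I_m -> R) m' (v' q' : 'I_m' -> R) (f : R -> R) :
  (forall i j : 'I_m', (i < j)%N -> v' i < v' j) ->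
  (forall i, 0 <= q i) -> (forall k, 0 <= q' k) ->
  stoch_dominates v q v' q' ->
  (forall t s, t <= s -> f t <= f s) -> (forall t, 0 <= f t) ->
  \sum_k q' k * f (v' k) <= \sum_i q i * f (v i).
Proof.
move=> vinc q0 q'0 dom fmono f0.
case: m' v' q' vinc q'0 dom => [|n] v' q' vinc q'0 dom.
  by rewrite big_ord0; apply: sumr_ge0 => i _; rewrite mulr_ge0.
pose w k := v' (inord k).
pose d k := f (w k) - (if k is k'.+1 then f (w k') else 0).
pose Sn N y := \sum_(k < N) (if w k <= y then d k else 0).
have SnS N y : Sn N.+1 y = Sn N y + (if w N <= y then d N else 0).
  by rewrite /Sn big_ord_recr.
have wmono a b : (a < b)%N -> (b < n.+1)%N -> w a < w b.
  move=> ab bn; apply: vinc; rewrite !inordK //; exact: ltn_trans bn.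
have d0 k : (k < n.+1)%N -> 0 <= d k.
  case: k => [|k] kn; rewrite /d ?subr0 // subr_ge0; apply: fmono; apply: ltW; exact: wmono.
have inv N : (N <= n.+1)%N -> (forall y, Sn N y <= f y) /\
    (forall y, (0 < N)%N -> w N.-1 <= y -> Sn N y = f (w N.-1)).
  elim: N => [|N IH] HN.
    by split=> // y; rewrite /Sn big_ord0.
  have [IH1 IH2] := IH (ltnW HN).
  have E2 y : w N <= y -> Sn N.+1 y = f (w N).
    move=> Hy; rewrite SnS Hy.
    case: N IH1 IH2 HN Hy {IH} => [|N] IH1 IH2 HN Hy.
      by rewrite /Sn big_ord0 /d subr0 add0r.
    rewrite IH2 //=; first by rewrite /d addrC subrK.
    apply: le_trans Hy; apply: ltW; exact: wmono.
  split=> y; last by move=> _ /= /E2.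
  case: (boolP (w N <= y)) => Hy; first by rewrite E2 //; exact: fmono.
  by rewrite SnS (negbTE Hy) addr0; exact: IH1.
have Smono y a b : (a <= b)%N -> (b <= n.+1)%N -> Sn a y <= Sn b y.
  move=> ab; elim: b ab => [|b IH]; first by rewrite leqn0 => /eqP->.
  rewrite leq_eqVlt => /orP [/eqP-> //| ab] bn.
  apply: le_trans (IH ab (ltnW bn)) _.
  rewrite SnS lerDl; case: ifP => // _; exact: d0.
have exch M (vv qq : 'I_M -> R) :
    \sum_i qq i * Sn n.+1 (vv i) = \sum_(j < n.+1) d j * tail_prob vv qq (w j).
  rewrite /Sn.
  under eq_bigr => i _ do rewrite mulr_sumr.
  rewrite exchange_big /=; apply: eq_bigr => j _.
  idtac.
  rewrite /tail_prob mulr_sumr [RHS]big_mkcond /=; apply: eq_bigr => i _.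
  by case: ifP => _; rewrite ?mulr0 // mulrC.
apply: (@le_trans _ _ (\sum_k q' k * Sn n.+1 (v' k))).
  apply: ler_sum => k _; apply: ler_wpM2l => //.
  have -> : v' k = w k by rewrite /w inord_val.
  have [_ I2] := inv k.+1 (ltn_ord k).
  rewrite -[in X in X <= _](I2 (w k)) //; exact: Smono.
apply: (@le_trans _ _ (\sum_i q i * Sn n.+1 (v i))); last first.
  apply: ler_sum => i _; apply: ler_wpM2l => //; exact: (inv n.+1 (leqnn _)).1.
rewrite !exch; apply: ler_sum => j _; apply: ler_wpM2l; [exact: d0 | exact: dom].
Qed.

Theorem lemmaC4 (R : realFieldType)
    (m : nat) (v q : 'I_m -> R) (m' : nat) (v' q' : 'I_m' -> R) (r r' : R) :
  is_fin_dist v q -> is_fin_dist v' q' ->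
  stoch_dominates v q v' q' ->
  is_MBRev v q r -> is_MBRev v' q' r' ->
  r' <= r.
Proof.
move=> [vinc [qpos _]] [v'inc [q'pos _]] dom [_ Hmax] [[x' [u' [[F1 [F2 F3]] Hobj]]] _].
have x0 k : 0 <= x' k by case/andP: (F3 k).
have x1 k : x' k <= 1 by case/andP: (F3 k).
pose A t := \big[Num.max/0]_(k < m' | (0 <= v' k) && (v' k <= t)) x' k.
pose G t := \big[Num.max/0]_(k < m' | (0 <= v' k) && (v' k <= t)) ((t - v' k) * x' k).
pose P t := t * A t - G t.
have A0 t : 0 <= A t by apply: bmax_ge0.
have G0 t : 0 <= G t by apply: bmax_ge0.
have Aemp t : t < 0 -> A t = 0 /\ G t = 0.
  move=> tn; split; apply/eqP; rewrite eq_le ?A0 ?G0 andbT; apply: bmax_le => // k /andP [h1 h2];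
  by have := le_lt_trans (le_trans h1 h2) tn; rewrite ltxx.
have xA t k : 0 <= v' k -> v' k <= t -> x' k <= A t.
  move=> h1 h2; rewrite /A; apply: le_bmax; by rewrite ?mem_index_enum ?h1.
have Ale t s : t <= s -> A t <= A s.
  move=> ts; apply: bmax_le => // k /andP [h1 h2]; apply: xA => //; exact: le_trans ts.
have Gge t k : 0 <= v' k -> (t - v' k) * x' k <= G t.
  move=> h1; case: (lerP (v' k) t) => h2.
    have := @le_bmax _ _ (index_enum _) (fun k => (0 <= v' k) && (v' k <= t)) (fun k => (t - v' k) * x' k) k (mem_index_enum k).
    by rewrite h1 h2; apply.
  have := x0 k; have := G0 t; nra.
have P0 s : 0 <= P s.
  case: (ltrP s 0) => sn.
    rewrite /P; have [-> ->] := Aemp s sn; by rewrite mulr0 subr0.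
  rewrite /P subr_ge0; apply: bmax_le; first by rewrite mulr_ge0.
  move=> k /andP [h1 h2]; have := xA s k h1 h2; have := x0 k; nra.
have Pmono t s : t <= s -> P t <= P s.
  move=> ts; case: (ltrP t 0) => tn.
    rewrite {1}/P; have [-> ->] := Aemp t tn; by rewrite mulr0 subr0.
  have h := Ale t s ts; have := A0 t; have := G0 t.
  rewrite /P => g0 a0.
  suff : G s <= s * A s - t * A t + G t by lra.
  apply: bmax_le; first nra.
  move=> k /andP [h1 h2]; have := Gge t k h1; have := xA s k h1 h2; have := x0 k; nra.
have Hr : \sum_i q i * P (v i) <= r.
  apply: (Hmax (fun i => A (v i)) (fun i => G (v i))).
  split; [|split] => //.
  - move=> i j ji; have vji := vinc _ _ ji; rewrite /A.
    have [->|[k [/andP [h1 h2] ->]]] := @bmax_att _ _ (index_enum 'I_m')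
        (fun k => (0 <= v' k) && (v' k <= v j)) x'.
      by rewrite mulr0.
    have := Gge (v i) k h1; have := x0 k; nra.
  - move=> i; by rewrite A0 /=; apply: bmax_le => // k _; exact: x1.
have Hr' : r' <= \sum_k q' k * P (v' k).
  rewrite -Hobj /MB_obj; apply: ler_sum => k _; apply: ler_wpM2l; first exact: ltW.
  case: (ltrP (v' k) 0) => vn.
    have := P0 (v' k); have := F2 k; have := x0 k; nra.
  have := xA (v' k) k vn (lexx _).
  suff : G (v' k) <= u' k by rewrite /P; nra.
  apply: bmax_le => // j /andP [h1 h2].
  case: (ltngtP j k) => jk.
  - exact: F1.
  - by have := lt_le_trans (v'inc _ _ jk) h2; rewrite ltxx.
  - have -> : j = k by apply: val_inj.
    by rewrite subrr mul0r.
apply: le_trans Hr' (le_trans _ Hr).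
apply: (@dom_mono _ _ v q _ v' q' P v'inc _ _ dom Pmono P0) => i; exact: ltW.
Qed.
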